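(* For any signed graph $(G,\sigma)$, $\chi_c\big((G,\sigma)\square(G,\sigma)\big)=\chi_c(G,\sigma)$.
   Context: A signed graph $(G,\sigma)$ is a finite graph $G$ (multiple edges allowed, no loops) with a signature $\sigma:E(G)\to\{+1,-1\}$. For real $r\ge 2$, $C^r$ is the circle of circumference $r$, $d_{C^r}(x,y)=\min\{|x-y|,r-|x-y|\}$, $\overline{x}=x+r/2\pmod r$. A circular $r$-coloring of $(G,\sigma)$ is $f:V(G)\to C^r$ with $d_{C^r}(f(u),f(v))\ge1$ for each positive edge $uv$ and $d_{C^r}(f(u),\overline{f(v)})\ge1$ for each negative edge $uv$; $\chi_c(G,\sigma)$ is the infimum of such $r\ge2$. The Type 1 Cartesian product $(G,\sigma)\square(H,\tau)$ has vertex set $V(G)\times V(H)$, with $(u,x)(v,y)$ an edge iff either $u=v$ and $xy\in E(H)$, or $x=y$ and $uv\in E(G)$; the edge $(u,x)(v,x)$ has sign $\sigma(uv)$ and the edge $(u,x)(u,y)$ has sign $\tau(xy)$. *)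

(* Defs.v *)
From HB Require Import structures.
From mathcomp Require Import all_boot all_order all_algebra.
From mathcomp Require Import boolp classical_sets reals.
Set Implicit Arguments. Unset Strict Implicit. Unset Printing Implicit Defensive.
Import Order.TTheory GRing.Theory Num.Theory.
Local Open Scope ring_scope.
Local Open Scope classical_set_scope.

(* A signed (multi)graph is given by a finite vertex type V, a finite edge
   type E, an endpoint map ends : E -> V * V (loops excluded by a separate
   hypothesis) and a signature sg : E -> bool, where [true] means +1 and
   [false] means -1. *)

Section Circular.
Variable R : realType.

(* distance on the circle C^r, points represented in [0, r) *)
Definition cdist (r x y : R) : R := Num.min `|x - y| (r - `|x - y|).

Definition cbar (r x : R) : R := if x + r / 2 < r then x + r / 2 else x - r / 2.

Definition circ_coloring (V E : finType) (ends : E -> V * V) (sg : E -> bool)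
  (r : R) (f : V -> R) : Prop :=
  (forall v, 0 <= f v < r) /\
  (forall e, if sg e then 1 <= cdist r (f (ends e).1) (f (ends e).2)
             else 1 <= cdist r (f (ends e).1) (cbar r (f (ends e).2))).

Definition chi_c (V E : finType) (ends : E -> V * V) (sg : E -> bool) : R :=
  inf [set r : R | 2 <= r /\ exists f : V -> R, circ_coloring ends sg r f].
End Circular.

(* Type 1 Cartesian product: edges (u,x)(v,x) for uv in E1, x in V2, with
   sign of uv; edges (u,x)(u,y) for u in V1, xy in E2, with sign of xy. *)
Definition prod_ends (V1 E1 V2 E2 : finType) (ends1 : E1 -> V1 * V1)
  (ends2 : E2 -> V2 * V2) (e : ((E1 * V2) + (V1 * E2))%type)
  : (V1 * V2) * (V1 * V2) :=
  match e with
  | inl (e1, x) => (((ends1 e1).1, x), ((ends1 e1).2, x))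
  | inr (u, e2) => ((u, (ends2 e2).1), (u, (ends2 e2).2))
  end.

Definition prod_sign (V1 E1 V2 E2 : finType) (sg1 : E1 -> bool) (sg2 : E2 -> bool)
  (e : ((E1 * V2) + (V1 * E2))%type) : bool :=
  match e with
  | inl (e1, _) => sg1 e1
  | inr (_, e2) => sg2 e2
  end.

(* Main.v *)
Require Import Defs.
From HB Require Import structures.
From mathcomp Require Import all_boot all_order all_algebra.
From mathcomp Require Import boolp classical_sets reals.
From mathcomp Require Import lra.
Import Order.TTheory GRing.Theory Num.Theory.
Local Open Scope ring_scope.

Set Implicit Arguments. Unset Strict Implicit.
Section Aux.
Variable R : realType.

Definition D5 (r d : R) : Prop :=
  d = 0 \/ d = r \/ d = - r \/ d = r + r \/ d = - (r + r).

Ltac ifs := repeat (case: ifPn; [move=> ? | rewrite -?leNgt -?ltNge => ?]).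
Ltac d5 := first [left; lra | right; left; lra | right; right; left; lra
                 | right; right; right; left; lra | right; right; right; right; lra].

Lemma cdist_shift (r x y x' y' : R) : 0 <= x -> x < r -> 0 <= y -> y < r ->
  0 <= x' -> x' < r -> 0 <= y' -> y' < r -> D5 r (x' - y' - (x - y)) ->
  cdist r x' y' = cdist r x y.
Proof.
move=> ? ? ? ? ? ? ? ? hd; rewrite /cdist.
case: hd => [|[|[|[|]]]] hd;
have [h1|h1] := lerP 0 (x - y); first [rewrite (ger0_norm h1) | rewrite (ltr0_norm h1)];
have [h2|h2] := lerP 0 (x' - y'); first [rewrite (ger0_norm h2) | rewrite (ltr0_norm h2)];
rewrite !minEle; ifs; lra.
Qed.

Definition md (r y : R) := if y < r then y else y - r.

Lemma md_rng (r a b : R) : 0 <= a -> a < r -> 0 <= b -> b < r ->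
  0 <= md r (a + b) /\ md r (a + b) < r.
Proof. move=> *; rewrite /md; ifs; lra. Qed.

Lemma cbar_rng (r a : R) : 0 <= a -> a < r -> 0 <= cbar r a /\ cbar r a < r.
Proof. move=> *; rewrite /cbar; ifs; lra. Qed.

Lemma pos_case (r a b c : R) : 0 <= a -> a < r -> 0 <= b -> b < r -> 0 <= c -> c < r ->
  cdist r (md r (a + c)) (md r (b + c)) = cdist r a b.
Proof.
move=> ha ha' hb hb' hc hc'.
have [? ?] := md_rng ha ha' hc hc'; have [? ?] := md_rng hb hb' hc hc'.
apply: cdist_shift => //; rewrite /md; ifs; d5.
Qed.

Lemma pos_case2 (r a b c : R) : 0 <= a -> a < r -> 0 <= b -> b < r -> 0 <= c -> c < r ->
  cdist r (md r (c + a)) (md r (c + b)) = cdist r a b.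
Proof. by move=> *; rewrite !(addrC c) pos_case. Qed.

Lemma neg_case (r a b c : R) : 0 <= a -> a < r -> 0 <= b -> b < r -> 0 <= c -> c < r ->
  cdist r (md r (a + c)) (cbar r (md r (b + c))) = cdist r a (cbar r b).
Proof.
move=> ha ha' hb hb' hc hc'.
have [? ?] := md_rng ha ha' hc hc'; have [h1 h2] := md_rng hb hb' hc hc'.
have [? ?] := cbar_rng h1 h2; have [? ?] := cbar_rng hb hb'.
apply: cdist_shift => //; rewrite /cbar /md; ifs; d5.
Qed.

Lemma neg_case2 (r a b c : R) : 0 <= a -> a < r -> 0 <= b -> b < r -> 0 <= c -> c < r ->
  cdist r (md r (c + a)) (cbar r (md r (c + b))) = cdist r a (cbar r b).
Proof. by move=> *; rewrite !(addrC c) neg_case. Qed.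

End Aux.

Theorem proposition1 (R : realType) (V E : finType) (ends : E -> V * V)
  (sg : E -> bool) (noloop : forall e, (ends e).1 != (ends e).2) :
  chi_c R (prod_ends (V2:=V) (E2:=E) ends ends) (prod_sign (V1:=V) (V2:=V) sg sg)
  = chi_c R ends sg.
Proof.
rewrite /chi_c; congr (inf _); apply/seteqP; split => r [h2 [F [Fr Fe]]]; split => //.
- case: (pickP [pred v : V | true]) => [v0 _ | hV].
    exists (fun u => F (u, v0)); split => [v|e]; first exact: Fr.
    by have := Fe (inl (e, v0)).
  exists (fun _ => 0); split => [v|e]; first by have := hV v.
  by have := hV (ends e).1.
- exists (fun p => md r (F p.1 + F p.2)); split.
    move=> [u x] /=; have /andP[h3 h4] := Fr u; have /andP[h5 h6] := Fr x.
    by have [-> ->] := md_rng h3 h4 h5 h6.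
  case=> [[e x]|[u e]] /=; have := Fe e;
  have /andP[? ?] := Fr (ends e).1; have /andP[? ?] := Fr (ends e).2.
    have /andP[? ?] := Fr x.
    by case: (sg e); rewrite ?pos_case ?neg_case.
  have /andP[? ?] := Fr u.
  by case: (sg e); rewrite ?pos_case2 ?neg_case2.
Qed.
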